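(* For every countable graph $G$ with $G < K_\omega$ there exists a countable graph $G''$ with $G < G'' < K_\omega$; that is, no pair $(G, K_\omega)$ is a gap in the class of all countable graphs.
   Context: All graphs are simple, undirected and loopless. $G \le H$ means there is a homomorphism (edge-preserving vertex map) $G \to H$; $G < H$ means $G \le H$ and $H \not\le G$. $K_\omega$ is the countably infinite complete graph. For a class $\mathcal K$ of graphs, a pair $(G_1,G_2)$ with $G_1,G_2\in\mathcal K$, $G_1 < G_2$ is a gap in $\mathcal K$ if there is no $G \in \mathcal K$ with $G_1 < G < G_2$. *)

(* Defs.v *)
(* Countable simple graphs, represented (up to isomorphism)
   with vertex set a subset of nat. *)

Record cgraph : Type := CGraph {
  V : nat -> Prop;
  E : nat -> nat -> Prop;
  E_sub : forall x y, E x y -> V x /\ V y;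
  E_sym : forall x y, E x y -> E y x;
  E_irr : forall x, ~ E x x
}.

Definition hom_le (G H : cgraph) : Prop :=
  exists f : nat -> nat,
    (forall x, V G x -> V H (f x)) /\
    (forall x y, E G x y -> E H (f x) (f y)).

Definition hom_lt (G H : cgraph) : Prop := hom_le G H /\ ~ hom_le H G.

Definition Komega : cgraph.
Proof.
  refine (CGraph (fun _ => True) (fun x y => x <> y) _ _ _).
  - intros; split; exact I.
  - intros x y H e; apply H; symmetry; exact e.
  - intros x H; apply H; reflexivity.
Defined.

(* Main.v *)
Require Import Defs.
From Stdlib Require Import Arith Lia Classical.

Section Cone.
Variable G : cgraph.

Definition CV (a : nat) : Prop := a = 0 \/ exists x, a = S x /\ V G x.
Definition CE (a b : nat) : Prop :=
  (a = 0 /\ exists y, b = S y /\ V G y) \/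
  (b = 0 /\ exists x, a = S x /\ V G x) \/
  (exists x y, a = S x /\ b = S y /\ E G x y).

Lemma CE_sub : forall x y, CE x y -> CV x /\ CV y.
Proof.
  unfold CE, CV; intros x y [[? [z [? ?]]]|[[? [z [? ?]]]|[u [w [? [? H]]]]]]; subst.
  - split; [left; reflexivity| right; eauto].
  - split; [right; eauto| left; reflexivity].
  - destruct (E_sub G _ _ H). split; right; eauto.
Qed.

Lemma CE_sym : forall x y, CE x y -> CE y x.
Proof.
  unfold CE; intros x y [[? ?]|[[? ?]|[u [w [? [? H]]]]]].
  - right; left; auto.
  - left; auto.
  - right; right; exists w, u; repeat split; auto. apply E_sym; auto.
Qed.

Lemma CE_irr : forall x, ~ CE x x.
Proof.
  unfold CE; intros x [[? [z [? ?]]]|[[? [z [? ?]]]|[u [w [? [? H]]]]]]; subst; try discriminate.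
  injection H1; intros; subst. eapply E_irr; eauto.
Qed.

Definition Cone : cgraph := CGraph CV CE CE_sub CE_sym CE_irr.
End Cone.

Lemma le_K (G : cgraph) : hom_le G Komega.
Proof.
  exists (fun x => x); split; simpl; auto.
  intros x y H e; subst; eapply E_irr; eauto.
Qed.

Theorem mainTheorem4 :
  forall G : cgraph, hom_lt G Komega ->
    exists G'' : cgraph, hom_lt G G'' /\ hom_lt G'' Komega.
Proof.
  intros G [_ HK].
  exists (Cone G). split; split.
  - exists S; split; simpl; unfold CV, CE; intros.
    + right; eauto.
    + right; right; eauto.
  - intros [f [fV fE]]. apply HK.
    set (g := fun x => f (S x)).
    assert (gV : forall x, V G x -> V G (g x)).
    { intros x Hx; apply fV; simpl; right; eauto. }
    assert (gE : forall x y, E G x y -> E G (g x) (g y)).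
    { intros x y H; apply fE; simpl; right; right; eauto. }
    assert (V0 : V G (f 0)) by (apply fV; simpl; left; auto).
    assert (N0 : forall y, V G y -> E G (f 0) (g y)).
    { intros y Hy; apply fE; simpl; left; eauto. }
    set (v := fun k => Nat.iter k g (f 0)).
    assert (vV : forall k, V G (v k)).
    { induction k; simpl; auto. }
    assert (vE : forall i j, i < j -> E G (v i) (v j)).
    { induction i; intros j Hij; destruct j; try lia.
      - simpl. apply N0. apply vV.
      - simpl. apply gE. apply IHi. lia. }
    exists v; split; simpl; auto.
    intros x y Hxy. destruct (Nat.lt_total x y) as [H|[H|H]].
    + auto.
    + contradiction.
    + apply E_sym; auto.
  - apply le_K.
  - intros [h [hV hE]]. apply HK. simpl in hE.
    assert (inj : forall a b, a <> b -> h a <> h b).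
    { intros a b Hab e. apply (CE_irr G (h a)). rewrite e at 2. auto. }
    destruct (classic (exists m, h m = 0)) as [[m Hm]|Hno].
    + exists (fun n => pred (h (n + S m))). split; simpl; intros x.
      * intros _. destruct (hV (x + S m) I) as [e|[z [e Hz]]].
        -- exfalso; apply (inj (x + S m) m); [lia|congruence].
        -- rewrite e; exact Hz.
      * intros y Hxy. assert (Hn : x + S m <> y + S m) by lia.
        destruct (hE _ _ Hn) as [[e ?]|[[e ?]|[u [w [e1 [e2 He]]]]]].
        -- exfalso; apply (inj (x + S m) m); [lia|congruence].
        -- exfalso; apply (inj (y + S m) m); [lia|congruence].
        -- rewrite e1, e2; exact He.
    + exists (fun n => pred (h n)). split; simpl; intros x.
      * intros _. destruct (hV x I) as [e|[z [e Hz]]].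
        -- exfalso; apply Hno; eauto.
        -- rewrite e; exact Hz.
      * intros y Hxy.
        destruct (hE _ _ Hxy) as [[e ?]|[[e ?]|[u [w [e1 [e2 He]]]]]].
        -- exfalso; apply Hno; eauto.
        -- exfalso; apply Hno; eauto.
        -- rewrite e1, e2; exact He.
Qed.
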